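(* Let $\Theta=(\alpha,\rho_r,\rho_d,\rho_s,\rho_0,T)$ with $\alpha>1$, $\rho_r,\rho_d,\rho_s,\rho_0>0$, $T>0$, and let $K_{max}(\Theta)=\min\big(\frac T4,\frac{\rho_r}{3\rho_0},\frac{3\rho_d}{2\rho_0}\big)$. Suppose (C.1) $\min\big(\frac T4,\frac{\rho_r}{3\rho_0},\frac{3\rho_d}{2\rho_0}\big)>10$ and (C.2) $\rho_s/\alpha>1/2$. Then $K_{max}(\Theta)>10$, and for all $K$ with $1\le K\le K_{max}(\Theta)$ and every $M>0$, $$M\Big(2K\rho_0+\frac{4K^2\rho_0}{T}\Big)+\frac{8K^3\rho_0}{3T}\le M\rho_r+K\rho_d.$$ *)

(* Defs.v *)
From Stdlib Require Import Reals.
Open Scope R_scope.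

Definition Kmax (rho_r rho_d rho_0 T : R) : R :=
  Rmin (Rmin (T / 4) (rho_r / (3 * rho_0))) (3 * rho_d / (2 * rho_0)).

(* Main.v *)
Require Import Defs.
From Stdlib Require Import Reals Lra Psatz.
Open Scope R_scope.

Theorem lemma2 (alpha rho_r rho_d rho_s rho_0 T : R)
  (halpha : 1 < alpha) (hr : 0 < rho_r) (hd : 0 < rho_d) (hs : 0 < rho_s)
  (h0 : 0 < rho_0) (hT : 0 < T)
  (C1 : Rmin (Rmin (T / 4) (rho_r / (3 * rho_0))) (3 * rho_d / (2 * rho_0)) > 10)
  (C2 : rho_s / alpha > 1 / 2) :
  Kmax rho_r rho_d rho_0 T > 10 /\
  forall K M : R, 1 <= K -> K <= Kmax rho_r rho_d rho_0 T -> 0 < M ->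
    M * (2 * K * rho_0 + 4 * K ^ 2 * rho_0 / T) + 8 * K ^ 3 * rho_0 / (3 * T)
      <= M * rho_r + K * rho_d.
Proof.
  split; [exact C1|].
  intros K M HK HKm HM. unfold Kmax in HKm.
  assert (H1 : K <= T / 4) by (eapply Rle_trans; [exact HKm|];
    eapply Rle_trans; [apply Rmin_l|apply Rmin_l]).
  assert (H2 : K <= rho_r / (3 * rho_0)) by (eapply Rle_trans; [exact HKm|];
    eapply Rle_trans; [apply Rmin_l|apply Rmin_r]).
  assert (H3 : K <= 3 * rho_d / (2 * rho_0)) by (eapply Rle_trans; [exact HKm|]; apply Rmin_r).
  assert (H2' : 3 * rho_0 * K <= rho_r).
  { apply (Rmult_le_compat_l (3*rho_0)) in H2; [|lra].
    replace (3 * rho_0 * (rho_r / (3 * rho_0))) with rho_r in H2 by (field; lra). lra. }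
  assert (H3' : 2 * rho_0 * K <= 3 * rho_d).
  { apply (Rmult_le_compat_l (2*rho_0)) in H3; [|lra].
    replace (2 * rho_0 * (3 * rho_d / (2 * rho_0))) with (3*rho_d) in H3 by (field; lra). lra. }
  set (a := K / T).
  assert (Ha : 0 < a <= 1/4).
  { unfold a; split. apply Rdiv_lt_0_compat; lra.
    apply (Rmult_le_reg_r T); [lra|]. unfold Rdiv; rewrite Rmult_assoc, Rinv_l; lra. }
  replace (4 * K ^ 2 * rho_0 / T) with (4 * K * rho_0 * a) by (unfold a; field; lra).
  replace (8 * K ^ 3 * rho_0 / (3 * T)) with (8/3 * K * K * rho_0 * a) by (unfold a; field; lra).
  assert (E0 : 4 * K * rho_0 * a <= K * rho_0).
  { assert (0 <= K * rho_0) by nra. nra. }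
  assert (E1 : 2 * K * rho_0 + 4 * K * rho_0 * a <= rho_r) by lra.
  assert (E2 : 8/3 * K * K * rho_0 * a <= K * rho_d).
  { assert (K * rho_0 * a <= K * rho_0 / 4) by lra.
    assert (8/3 * K * (K * rho_0 * a) <= 8/3 * K * (K * rho_0 / 4)) by (apply Rmult_le_compat_l; lra).
    nra. }
  nra.
Qed.
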